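(* Let $[\mathbf{G}]$ be a random field belonging to $\mathcal{C}^{2,S}_n$ and let $[\mathbf{K}_0]$ be the random field in $\mathcal{C}^+_n$ such that $[\mathbf{K}_0(\mathbf{x})]=\mathbb{L}([\mathbf{G}(\mathbf{x})])$ for all $\mathbf{x}\in D$. Then: (i) there exist two real numbers $0<\gamma_0<+\infty$ and $0<\gamma_1<+\infty$ such that for all $\mathbf{x}\in D$, $\|\mathbf{K}_0(\mathbf{x})\|_F\le\gamma_0+\gamma_1\|\mathbf{G}(\mathbf{x})\|_F^2$ almost surely; moreover $E\{\|\mathbf{K}_0(\mathbf{x})\|_F\}<+\infty$, and if $E\{\|\mathbf{G}(\mathbf{x})\|_F^4\}<+\infty$ then $E\{\|\mathbf{K}_0(\mathbf{x})\|_F^2\}<+\infty$; (ii) if $\|\mathbf{G}(\mathbf{x})\|_F\le\beta_G<+\infty$ almost surely for all $\mathbf{x}\in D$, where $\beta_G$ is a positive random variable independent of $\mathbf{x}$, then $\|\mathbf{K}_0(\mathbf{x})\|_F\le\beta_0<+\infty$ almost surely for all $\mathbf{x}\in D$, where $\beta_0=\gamma_0+\gamma_1\beta_G^2$ is a positive random variable independent of $\mathbf{x}$.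
   Context: Let $d,n\ge1$ be integers and $D\subset\mathbb{R}^d$ a bounded open domain. $\mathbb{M}_n^+(\mathbb{R})$ (resp. $\mathbb{M}_n^S(\mathbb{R})$) is the set of symmetric positive-definite (resp. symmetric) real $n\times n$ matrices; $\|\cdot\|_F$ is the Frobenius norm. $\mathcal{C}^+_n$ is the set of random fields on $D$ (on a probability space) with values in $\mathbb{M}_n^+(\mathbb{R})$; $\mathcal{C}^{2,S}_n$ is the set of random fields $[\mathbf{G}]$ on $D$ with values in $\mathbb{M}_n^S(\mathbb{R})$ with $E\{\|\mathbf{G}(\mathbf{x})\|_F^2\}<+\infty$ for all $\mathbf{x}$. For each real $a>0$, let $g\mapsto h(g;a)$ be a function from $\mathbb{R}$ into $\mathbb{R}^+$ such that (i) $h(\cdot;a)$ is strictly monotonically increasing on $\mathbb{R}$, and (ii) there exist reals $0<c_h<+\infty$ and $0<c_a<+\infty$ with $h(g;a)\le c_a+c_h g^2$ for all $g\in\mathbb{R}$. Fix positive reals $a_1,\dots,a_n$. For $[G]\in\mathbb{M}_n^S(\mathbb{R})$, let $\mathcal{L}([G])$ be the upper triangular $n\times n$ real matrix with $[\mathcal{L}([G])]_{jj'}=[G]_{jj'}$ for $1\le j<j'\le n$ and $[\mathcal{L}([G])]_{jj}=\sqrt{h([G]_{jj};a_j)}$ for $1\le j\le n$, and set $\mathbb{L}([G])=\mathcal{L}([G])^T\mathcal{L}([G])$. *)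

(* Defs.v *)
From HB Require Import structures.
From mathcomp Require Import all_boot all_order all_algebra.
From mathcomp Require Import all_classical all_reals all_analysis.
Set Implicit Arguments. Unset Strict Implicit. Unset Printing Implicit Defensive.
Import Order.TTheory GRing.Theory Num.Theory.
Import numFieldNormedType.Exports.
Local Open Scope ring_scope.

Definition frob {R : realType} {n : nat} (A : 'M[R]_n) : R :=
  Num.sqrt (\sum_(i < n) \sum_(j < n) A i j ^+ 2).

Definition symmetric_mx {R : realType} {n : nat} (A : 'M[R]_n) : Prop := A^T = A.

Definition admissible_h {R : realType} (h : R -> R -> R) : Prop :=
  forall a : R, 0 < a ->
    (forall g, 0 < h g a) /\
    (forall g1 g2, g1 < g2 -> h g1 a < h g2 a) /\
    (exists ch ca : R, 0 < ch /\ 0 < ca /\ forall g, h g a <= ca + ch * g ^+ 2).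

Definition Lcal {R : realType} {n : nat} (h : R -> R -> R) (a : 'I_n -> R)
  (G : 'M[R]_n) : 'M[R]_n :=
  \matrix_(i, j) (if (i < j)%N then G i j
                  else if i == j then Num.sqrt (h (G i i) (a i)) else 0).

Definition LL {R : realType} {n : nat} (h : R -> R -> R) (a : 'I_n -> R)
  (G : 'M[R]_n) : 'M[R]_n :=
  (Lcal h a G)^T *m Lcal h a G.

(* Main.v *)
Require Import Defs.
From HB Require Import structures.
From mathcomp Require Import all_boot all_order all_algebra.
From mathcomp Require Import all_classical all_reals all_analysis.
From mathcomp Require Import ring lra.
Import Order.TTheory GRing.Theory Num.Theory.
Import numFieldNormedType.Exports.
Local Open Scope classical_set_scope.
Local Open Scope ring_scope.
Lemma int_mono d (T : measurableType d) (R : realType) (mu : {measure set T -> \bar R})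
  (f g : T -> \bar R) : (forall x, (0 <= f x)%E) -> (forall x, (f x <= g x)%E) ->
  (\int[mu]_x f x <= \int[mu]_x g x)%E.
Proof.
move=> f0 fg.
have g0 : forall x, (0 <= g x)%E by move=> x; exact: le_trans (f0 x) (fg x).
rewrite /integral !patch_setT.
have -> : (f^\-)%E = cst 0%E.
  by apply/funext => x; rewrite (ge0_funenegE (D:=setT)) ?inE // => y _.
have -> : (g^\-)%E = cst 0%E.
  by apply/funext => x; rewrite (ge0_funenegE (D:=setT)) ?inE // => y _.
apply: leeB => //; apply: ereal_sup_le => _ [h /= hf <-]; exists h => //= x.
apply: le_trans (hf x) _.
rewrite !funeposE; apply: le_max2 => //; exact: fg.
Qed.

Lemma int_fin d (T : measurableType d) (R : realType) (P : probability T R)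
  (f u : T -> R) (c0 c1 : R) : 0 <= c0 -> 0 <= c1 -> measurable_fun setT u ->
  (forall x, 0 <= u x) -> (forall x, 0 <= f x) -> (forall x, f x <= c0 + c1 * u x) ->
  (\int[P]_x (u x)%:E < +oo)%E -> (\int[P]_x (f x)%:E < +oo)%E.
Proof.
move=> c00 c10 mu u0 f0 fu ui.
apply: (le_lt_trans (@int_mono _ _ _ P _ (fun x => (c0%:E + c1%:E * (u x)%:E)%E) _ _)).
- by move=> x; rewrite lee_fin.
- by move=> x; rewrite -EFinM -EFinD lee_fin.
rewrite ge0_integralD //; last 2 first.
- by move=> x _; rewrite mule_ge0 // lee_fin.
- by apply: measurable_funeM; apply/measurable_realfun.measurable_EFinP.
rewrite ge0_integralZl //; last 2 first.
- by apply/measurable_realfun.measurable_EFinP.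
- by move=> x _; rewrite lee_fin.
rewrite (integral_cst P measurableT c0%:E).
apply: lte_add_pinfty.
  apply: lte_mul_pinfty => //.

  have h1 := probability_setT P.
  have h2 : (P [set: T] < +oo)%E by rewrite h1 ltry.
  exact h2.
by apply: lte_mul_pinfty => //; rewrite lee_fin.
Qed.
Lemma eqle (R : realType) (x y : R) : x = y -> x <= y.
Proof. by move=> ->. Qed.

Lemma ab_le (R : realType) (u v : R) : 0 <= u -> 0 <= v -> u * v <= u ^+ 2 + v ^+ 2.
Proof.
move=> u0 v0; have [uv|vu] := leP u v.
  by apply: le_trans (ler_wpM2r v0 uv) _; rewrite -expr2 lerDr sqr_ge0.
by apply: le_trans (ler_wpM2l u0 (ltW vu)) _; rewrite -expr2 lerDl sqr_ge0.
Qed.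

Lemma le_sum1 (R : realType) n (F : 'I_n -> R) j :
  (forall i, 0 <= F i) -> F j <= \sum_i F i.
Proof.
by move=> F0; rewrite (bigD1 j) //= lerDl sumr_ge0.
Qed.

Lemma frob_ge0 (R : realType) n (A : 'M[R]_n) : 0 <= frob A.
Proof. exact: sqrtr_ge0. Qed.

Lemma frob_sq (R : realType) n (A : 'M[R]_n) :
  frob A ^+ 2 = \sum_i \sum_j A i j ^+ 2.
Proof.
by rewrite sqr_sqrtr // sumr_ge0 // => i _; rewrite sumr_ge0 // => j _; exact: sqr_ge0.
Qed.

Section Core.
Variables (R : realType) (n : nat) (h : R -> R -> R) (a : 'I_n -> R)
  (ch ca : 'I_n -> R).
Hypotheses (ch0 : forall i, 0 <= ch i) (ca0 : forall i, 0 <= ca i)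
  (hpos : forall i g, 0 < h g (a i))
  (hbnd : forall i g, h g (a i) <= ca i + ch i * g ^+ 2).

Let C := \sum_i ch i.
Let A := \sum_i ca i.

Lemma ch_leC i : ch i <= C.
Proof. exact: le_sum1. Qed.

Lemma Lentry (G : 'M[R]_n) i j :
  (Lcal h a G) i j ^+ 2 <= (1 + C) * G i j ^+ 2 + (if i == j then ca i else 0).
Proof.
have C0 : 0 <= C by apply: sumr_ge0.
have hC := ch_leC i.
have g0 := sqr_ge0 (G i j).
rewrite mxE; case: ifP => ij.
  have : i != j by apply/eqP => e; move: ij; rewrite e ltnn.
  move/negbTE => ->; rewrite addr0 mulrDl mul1r lerDl mulr_ge0 //.
case: eqP => [e|_]; last by rewrite expr0n /= addr0 mulr_ge0 // addr_ge0.
rewrite sqr_sqrtr; last exact: ltW.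
subst j; apply: le_trans (hbnd i (G i i)) _; rewrite addrC lerD2r.
  apply: ler_wpM2r => //; apply: le_trans hC _; rewrite lerDr //.
Qed.

Let S (G : 'M[R]_n) := \sum_i \sum_j (Lcal h a G) i j ^+ 2.

Lemma S_le G : S G <= A + (1 + C) * frob G ^+ 2.
Proof.
rewrite frob_sq /S /A mulr_sumr addrC -big_split /=.
apply: ler_sum => i _; rewrite mulr_sumr.
have -> : ca i = \sum_j (if i == j then ca i else 0).
  by rewrite -big_mkcond /= (eq_bigl (fun j => j == i)) ?big_pred1_eq // => j; rewrite eq_sym.
rewrite -big_split /=; apply: ler_sum => j _; exact: Lentry.
Qed.

Lemma K_entry G i j : `|(LL h a G) i j| <= 2 * S G.
Proof.
rewrite /S /LL; move: (Lcal h a G) => L.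
rewrite mxE; apply: le_trans (ler_norm_sum _ _ _) _.
rewrite mulr2n mulrDl mul1r.
apply: le_trans (_ : \sum_k (L k i ^+ 2 + L k j ^+ 2) <= _).
  apply: ler_sum => k _; rewrite !mxE normrM.
  have := normr_ge0 (L k i); have := normr_ge0 (L k j).
  rewrite -(real_normK (num_real (L k i))) -(real_normK (num_real (L k j))).
  move: `|L k i| `|L k j| => u v v0 u0; exact: ab_le.
rewrite big_split /=; apply: lerD; apply: ler_sum => k _;
  apply: (@le_sum1 R n (fun l => L k l ^+ 2)) => l; exact: sqr_ge0.
Qed.

Lemma frob_LL G :
  frob (LL h a G) <= 2 * n%:R * A + 2 * n%:R * (1 + C) * frob G ^+ 2.
Proof.
have K := K_entry G.
have S0 : 0 <= S G.
  by apply: sumr_ge0 => i _; apply: sumr_ge0 => j _; exact: sqr_ge0.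
have Hs := S_le G.
move: (S G) K S0 Hs => s K S0 Hs.
move: (LL h a G) K => M K.
have b0 : 0 <= n%:R * (2 * s) by rewrite mulr_ge0 // mulr_ge0.
apply: (@le_trans _ _ (n%:R * (2 * s))).
  rewrite /frob -(ger0_norm b0) -sqrtr_sqr ler_sqrt; last exact: sqr_ge0.
  apply: (@le_trans _ _ (\sum_(i < n) \sum_(j < n) (2 * s) ^+ 2)).
    apply: ler_sum => i _; apply: ler_sum => j _.
    have Kij := K i j.
    rewrite -(real_normK (num_real (M i j))) !expr2.
    exact: (ler_pM (normr_ge0 _) (normr_ge0 _) Kij Kij).
  rewrite sumr_const sumr_const card_ord -mulrnA -(mulr_natr ((2 * s) ^+ 2) (n * n)) natrM.
  move: (n%:R : R) => m.
  apply: eqle; ring.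
have n0 : 0 <= n%:R :> R by [].
apply: le_trans (ler_wpM2l n0 (ler_wpM2l _ Hs)) _ => //.
move: (frob G ^+ 2) A C (n%:R : R) => F A' C' m.
apply: eqle; ring.
Qed.

End Core.

Theorem proposition2 (R : realType) (d n : nat)
  (D : set 'rV[R]_d) (HDopen : open D) (HDbnd : bounded_set D)
  (h : R -> R -> R) (Hh : admissible_h h)
  (a : 'I_n -> R) (Ha : forall j, 0 < a j)
  (dO : measure_display) (Omega : measurableType dO) (P : probability Omega R)
  (G : 'rV[R]_d -> Omega -> 'M[R]_n)
  (HGsym : forall x, D x -> forall w, symmetric_mx (G x w))
  (HGmeas : forall x, D x -> forall i j,
      measurable_fun setT (fun w => G x w i j))
  (HG2 : forall x, D x ->
      (\int[P]_w ((frob (G x w)) ^+ 2)%:E < +oo)%E) :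
  let K0 := fun x w => LL h a (G x w) in
  exists gamma0 gamma1 : R, 0 < gamma0 /\ 0 < gamma1 /\
    (* (i) *)
    (forall x, D x ->
       {ae P, forall w, frob (K0 x w) <= gamma0 + gamma1 * (frob (G x w)) ^+ 2}) /\
    (forall x, D x -> (\int[P]_w (frob (K0 x w))%:E < +oo)%E) /\
    (forall x, D x ->
       (\int[P]_w ((frob (G x w)) ^+ 4)%:E < +oo)%E ->
       (\int[P]_w ((frob (K0 x w)) ^+ 2)%:E < +oo)%E) /\
    (* (ii) *)
    (forall betaG : Omega -> R,
       measurable_fun setT betaG -> (forall w, 0 < betaG w) ->
       (forall x, D x -> {ae P, forall w, frob (G x w) <= betaG w}) ->
       let beta0 := fun w => gamma0 + gamma1 * betaG w ^+ 2 in
       (forall w, 0 < beta0 w) /\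
       (forall x, D x -> {ae P, forall w, frob (K0 x w) <= beta0 w})).
Proof.
move=> K0.
have [f Hf] : {f : 'I_n -> R * R & forall j, 0 < (f j).1 /\ 0 < (f j).2 /\
    forall g, h g (a j) <= (f j).2 + (f j).1 * g ^+ 2}.
  apply: (@boolp.choice _ _ (fun j (p : R * R) => 0 < p.1 /\ 0 < p.2 /\
    forall g, h g (a j) <= p.2 + p.1 * g ^+ 2)) => j.
  have [_ [_ [ch [ca [? [? ?]]]]]] := Hh _ (Ha j).
  by exists (ch, ca).
pose ch := fun j => (f j).1.
pose ca := fun j => (f j).2.
have ch0 : forall j, 0 <= ch j by move=> j; have [/ltW ? _] := Hf j.
have ca0 : forall j, 0 <= ca j by move=> j; have [_ [/ltW ? _]] := Hf j.
have hpos : forall i g, 0 < h g (a i) by move=> i g; have [+ _] := Hh _ (Ha i); apply.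
have hb : forall i g, h g (a i) <= ca i + ch i * g ^+ 2.
  by move=> i g; have [_ [_ ]] := Hf i; apply.
pose A := \sum_i ca i.
pose C := \sum_i ch i.
have A0 : 0 <= A by apply: sumr_ge0.
have C0 : 0 <= C by apply: sumr_ge0.
have nA0 : 0 <= 2 * n%:R * A by rewrite mulr_ge0 // mulr_ge0.
have nC0 : 0 <= 2 * n%:R * (1 + C) by rewrite mulr_ge0 // ?mulr_ge0 // addr_ge0.
exists (1 + 2 * n%:R * A), (1 + 2 * n%:R * (1 + C)).
have g00 : 0 < 1 + 2 * n%:R * A by lra.
have g10 : 0 < 1 + 2 * n%:R * (1 + C) by lra.
have bnd : forall M : 'M[R]_n, frob (LL h a M) <=
    (1 + 2 * n%:R * A) + (1 + 2 * n%:R * (1 + C)) * frob M ^+ 2.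
  move=> M; apply: le_trans (@frob_LL R n h a ch ca ch0 hpos hb M) _.
  have F0 := sqr_ge0 (frob M).
  move: (2 * n%:R * (1 + C)) (2 * n%:R * A) (frob M ^+ 2) F0 => X Z F F0.
  rewrite mulrDl mul1r.
  move: (X * F) => Y; lra.
have mF2 : forall x, D x -> measurable_fun setT (fun w => frob (G x w) ^+ 2).
  move=> x Dx.
  rewrite (_ : (fun w => _) = (fun w => \sum_i \sum_j G x w i j ^+ 2)); last first.
    by apply/funext => w; rewrite frob_sq.
  apply: measurable_sum => i; apply: measurable_sum => j.
  exact: measurable_realfun.measurable_funX (HGmeas x Dx i j).
split => //; split => //; split.
  by move=> x Dx; apply: aeW => w; exact: bnd.
split.
  move=> x Dx.
  apply: (@int_fin _ _ _ P _ (fun w => frob (G x w) ^+ 2)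
    (1 + 2 * n%:R * A) (1 + 2 * n%:R * (1 + C))) => //.
  - exact: ltW.
  - exact: ltW.
  - exact: mF2.
  - by move=> w; exact: sqr_ge0.
  - by move=> w; exact: frob_ge0.
  - by move=> w; exact: bnd.
  - exact: HG2.
split.
  move=> x Dx H4.
  have e4 : forall y : R, y ^+ 4 = (y ^+ 2) ^+ 2 by move=> y; rewrite -exprM.
  apply: (@int_fin _ _ _ P _ (fun w => frob (G x w) ^+ 4)
    (2 * (1 + 2 * n%:R * A) ^+ 2) (2 * (1 + 2 * n%:R * (1 + C)) ^+ 2)) => //.
  - by rewrite mulr_ge0 // sqr_ge0.
  - by rewrite mulr_ge0 // sqr_ge0.
  - rewrite (_ : (fun w => _) = (fun w => (frob (G x w) ^+ 2) ^+ 2)); last first.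
      by apply/funext => w; rewrite e4.
    exact: measurable_realfun.measurable_funX (mF2 x Dx).
  - by move=> w; rewrite e4; exact: sqr_ge0.
  - by move=> w; exact: sqr_ge0.
  - move=> w; rewrite e4.
    have := bnd (G x w); have := @frob_ge0 _ _ (K0 x w).
    rewrite /K0.
    move: (frob (LL h a (G x w))) (frob (G x w) ^+ 2) (sqr_ge0 (frob (G x w))) => k X X0.
    move: (1 + 2 * n%:R * A) (1 + 2 * n%:R * (1 + C)) g00 g10 => c0 c1 c00 c10.
    move=> k0 kb.
    have : k ^+ 2 <= (c0 + c1 * X) ^+ 2 by rewrite !expr2; apply: ler_pM.
    move=> H; apply: le_trans H _.
    rewrite (_ : 2 * c0 ^+ 2 + 2 * c1 ^+ 2 * X ^+ 2 = (c0 + c1 * X) ^+ 2 + (c0 - c1 * X) ^+ 2); last by ring.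
    by rewrite lerDl sqr_ge0.
move=> bG mb bG0 Hae beta0; split.
  move=> w; rewrite /beta0.
  have := sqr_ge0 (bG w); have := ltW g10; move: (bG w ^+ 2) => y.
  move: (1 + 2 * n%:R * (1 + C)) => c1 c10 y0.
  have : 0 <= c1 * y by rewrite mulr_ge0.
  lra.
move=> x Dx; apply: filterS (Hae x Dx) => w Hw.
apply: le_trans (bnd _) _; rewrite /beta0 lerD2l.
apply: ler_wpM2l; first exact: ltW.
have := @frob_ge0 _ _ (G x w); move: (frob (G x w)) Hw => y Hy y0.
by rewrite !expr2; apply: ler_pM.
Qed.
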